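(* Let $p,q\geq 2$ be relatively prime integers and $x,y,a\in A_{pq}$. Then $g_{p,q}(x,a)\equiv g_{p,q}(y,a)\pmod q$ if and only if $x\equiv y\pmod q$.
   Context: For an integer $n>1$, $A_n=\{0,1,\dots,n-1\}$. Define $g_{p,q}:A_{pq}\times A_{pq}\to A_{pq}$ by writing $x=x_1q+x_0$, $y=y_1q+y_0$ with $x_0,y_0\in A_q$, $x_1,y_1\in A_p$ (uniquely), and setting $g_{p,q}(x,y)=x_0p+y_1$. *)

(* Defs.v *)
From mathcomp Require Import all_boot.

(* A_n = {0,...,n-1} is represented by naturals x with x < n.
   For x, y in A_{pq}: x = x1*q + x0 with x0 = x %% q in A_q, x1 = x %/ q in A_p;
   g_{p,q}(x,y) = x0 * p + y1. *)
Definition g (p q x y : nat) : nat := (x %% q) * p + y %/ q.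

(* Main.v *)
Require Import Defs.
From mathcomp Require Import all_boot.

Lemma aux (p q a b : nat) : coprime p q -> a < q -> b < q -> a <= b ->
  (a * p == b * p %[mod q]) -> a = b.
Proof.
move=> cp aq bq ab H0.
have : b * p == a * p %[mod q] by rewrite eq_sym.
rewrite eqn_mod_dvd ?leq_mul2r ?ab ?orbT // -mulnBl.
rewrite Gauss_dvdl; last by rewrite coprime_sym.
move=> H; have: b - a < q by apply: leq_ltn_trans (leq_subr _ _) bq.
move: H; case E: (b - a) => [|k]; first by move=> _ _; apply/eqP; rewrite eqn_leq ab -subn_eq0 E.
move=> /dvdn_leq => /(_ isT) H1 H2; by rewrite ltnNge H1 in H2.
Qed.

Theorem lemma3 (p q x y a : nat) :
  2 <= p -> 2 <= q -> coprime p q ->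
  x < p * q -> y < p * q -> a < p * q ->
  (g p q x a = g p q y a %[mod q]) <-> (x = y %[mod q]).
Proof.
move=> hp hq cp _ _ _; rewrite /g.
have q0 : 0 < q by apply: leq_trans hq.
split; last by move=> ->.
move/eqP; rewrite eqn_modDr => H.
have ha := ltn_pmod x q0; have hb := ltn_pmod y q0.
case: (leqP (x %% q) (y %% q)) => hl.
  have := @aux p q _ _ cp ha hb hl H. done.
apply/esym; apply: (@aux p q _ _ cp hb ha (ltnW hl)).
by rewrite eq_sym.
Qed.
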